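(* Let $A$ be a three-dimensional permutation array of size $n_1\times n_2\times n_1n_2$ (defined by a bijection $\varphi:[n_1]\times[n_2]\to[n_1n_2]$, with $n_1,n_2\ge2$). If any of the following holds: (i) $n_1$ and $n_2$ are both odd; (ii) $n_1$ and $n_2$ are both even and $\max(n_1,n_2)>4$; (iii) one of $n_1,n_2$ is even and greater than $2$ and the other is odd; then there is an $n_1\times n_2\times n_1n_2$ window in the periodic extension of $A$ having a repeated difference vector.
   Context: For $n\in\mathbb{N}$, $[n]=\{1,\dots,n\}$. The array $A:[n_1]\times[n_2]\times[n_1n_2]\to\{0,1\}$ is defined by $A(a_1,a_2,a_3)=1$ iff $\varphi(a_1,a_2)=a_3$; points with value 1 are dots. The periodic extension $\mathbb{A}:\mathbb{Z}^3\to\{0,1\}$ is $\mathbb{A}(a_1,a_2,a_3)=A(a_1',a_2',a_3')$ where $a_i'$ is the representative of $a_i$ modulo the $i$-th side length lying in $\{1,\dots,\text{side length}\}$; an $n_1\times n_2\times n_1n_2$ window is the restriction of $\mathbb{A}$ to a box $\{k_1,\dots,k_1+n_1-1\}\times\{k_2,\dots,k_2+n_2-1\}\times\{k_3,\dots,k_3+n_1n_2-1\}$. The difference vector from dot $(a_i)$ to a distinct dot $(w_i)$ is $\langle w_1-a_1,w_2-a_2,w_3-a_3\rangle$; a window has a repeated difference vector if two distinct ordered pairs of distinct dots in it have equal difference vectors. *)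

(* Defs.v *)
From mathcomp Require Import all_boot all_order all_algebra.
Set Implicit Arguments. Unset Strict Implicit. Unset Printing Implicit Defensive.
Import Order.TTheory GRing.Theory Num.Theory.
Local Open Scope ring_scope.

(* Indexing convention: an ordinal i : 'I_n stands for the element i+1 of [n].
   So phi : 'I_n1 * 'I_n2 -> 'I_(n1*n2) encodes the bijection
   varphi : [n1] x [n2] -> [n1 n2] via varphi(i+1,j+1) = phi(i,j)+1. *)

Definition point := (int * int * int)%type.

(* The representative of a modulo n lying in {1,...,n} is ((a-1) mod n) + 1;
   as an ordinal index it is (a-1) mod n.  A point of Z^3 is a dot of the
   periodic extension iff A at the representatives equals 1, i.e.
   varphi(a1', a2') = a3'. *)
Definition is_dot (n1 n2 : nat) (phi : 'I_n1 * 'I_n2 -> 'I_(n1 * n2))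
  (p : point) : bool :=
  let: (a1, a2, a3) := p in
  [exists i : 'I_n1, exists j : 'I_n2,
     [&& ((a1 - 1) %% n1)%Z == (nat_of_ord i)%:Z,
         ((a2 - 1) %% n2)%Z == (nat_of_ord j)%:Z &
         ((a3 - 1) %% (n1 * n2)%N)%Z == (nat_of_ord (phi (i, j)))%:Z]].

Definition in_window (n1 n2 : nat) (k : point) (p : point) : bool :=
  let: (k1, k2, k3) := k in
  let: (a1, a2, a3) := p in
  [&& k1 <= a1 <= k1 + n1%:Z - 1,
      k2 <= a2 <= k2 + n2%:Z - 1 &
      k3 <= a3 <= k3 + (n1 * n2)%N%:Z - 1].

Definition diff_vec (p q : point) : point :=
  let: (a1, a2, a3) := p in
  let: (w1, w2, w3) := q in (w1 - a1, w2 - a2, w3 - a3).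

Definition window_dot (n1 n2 : nat) (phi : 'I_n1 * 'I_n2 -> 'I_(n1 * n2)) (k p : point) : bool :=
  in_window n1 n2 k p && is_dot phi p.

Definition has_repeated_diff n1 n2 (phi : 'I_n1 * 'I_n2 -> 'I_(n1 * n2))
  (k : point) : Prop :=
  exists p q r s : point,
    [/\ window_dot phi k p, window_dot phi k q,
        window_dot phi k r, window_dot phi k s &
        [/\ p != q, r != s, (p, q) != (r, s) & diff_vec p q = diff_vec r s]].

(* Main.v *)
Require Import Defs.
From mathcomp Require Import all_boot all_order all_algebra zify.
From Stdlib Require Import Classical.
Import Order.TTheory GRing.Theory Num.Theory.
Local Open Scope ring_scope.
Lemma mod_char (a r q n : int) : 0 <= r < n -> a = r + q * n -> (a %% n)%Z = r.
Proof. move=> /andP[h1 h2] ->. rewrite addrC modzMDl modz_small //. by rewrite h1 h2. Qed.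

Lemma coord12 (n : nat) (d : int) (u v : nat) : (u < n)%N -> (v < n)%N ->
  (d = 0 /\ (1 <= n)%N) \/ (d = 1 /\ (3 <= n)%N) ->
  exists k a b : int,
    [/\ k <= u%:Z + a * n%:Z, u%:Z + a * n%:Z + d <= k + n%:Z - 1,
        k <= v%:Z + b * n%:Z & v%:Z + b * n%:Z + d <= k + n%:Z - 1].
Proof.
move=> hu hv [[-> hn]|[-> hn]].
  by exists 0, 0, 0; split; lia.
pose w := if (u != 0%N) && (v != 0%N) then 0%N else if (u != 1%N) && (v != 1%N) then 1%N else 2%N.
have hw : [/\ (w < 3)%N, w != u & w != v].
  rewrite /w; case: (u =P 0%N) => e1; case: (v =P 0%N) => e2; case: (u =P 1%N) => e3;
    case: (v =P 1%N) => e4 /=; split; lia.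
case: hw => hw3 hwu hwv.
exists (w%:Z + 1), (if (u < w)%N then 1 else 0), (if (v < w)%N then 1 else 0).
case: (ltnP u w); case: (ltnP v w) => h1 h2; split; lia.
Qed.

Lemma coord3 (N u v dl : int) : 0 <= u < N -> 0 <= v < N -> 1 <= dl <= N - 1 ->
  ~ (2 * dl = N /\ (v - u = dl \/ u - v = dl)) ->
  exists eps k a b : int, (eps = 0 \/ eps = 1) /\
    (k <= u + a * N /\ u + a * N <= k + N - 1 /\ k <= u + a * N + (dl - eps * N) /\
        u + a * N + (dl - eps * N) <= k + N - 1 /\
        k <= v + b * N /\ v + b * N <= k + N - 1 /\ k <= v + b * N + (dl - eps * N) /\
        v + b * N + (dl - eps * N) <= k + N - 1).
Proof.
move=> hu hv hd hn.
have gen : forall u v : int, 0 <= u < N -> 0 <= v < N -> u <= v ->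
  ~ (2 * dl = N /\ (v - u = dl \/ u - v = dl)) ->
  exists eps k a b : int, (eps = 0 \/ eps = 1) /\
    (k <= u + a * N /\ u + a * N <= k + N - 1 /\ k <= u + a * N + (dl - eps * N) /\
        u + a * N + (dl - eps * N) <= k + N - 1 /\
        k <= v + b * N /\ v + b * N <= k + N - 1 /\ k <= v + b * N + (dl - eps * N) /\
        v + b * N + (dl - eps * N) <= k + N - 1).
  clear hu hv hn u v => u v hu hv huv hn.
  case: (lerP (v - u) (N - 1 - dl)) => h1.
    by exists 0, u, 0, 0; split; lia.
  case: (lerP (v - u) (dl - 1)) => h2.
    by exists 1, (u + dl - N), 0, 0; split; lia.
  case: (lerP (dl + 1) (v - u)) => h3.
    by exists 0, v, 1, 0; split; lia.
  case: (lerP (N - dl + 1) (v - u)) => h4.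
    by exists 1, (v + dl - N), 1, 0; split; lia.
  exfalso; apply: hn; lia.
case: (lerP u v) => huv.
  exact: gen.
have [eps [k [a [b [he [h1 [h2 [h3 [h4 [h5 [h6 [h7 h8]]]]]]]]]]]] := gen v u hv hu (ltW huv) ltac:(lia).
by exists eps, k, b, a; split; [|lia].
Qed.

Section S2. Set Implicit Arguments. Unset Strict Implicit.
Definition Gv n1 n2 (phi : 'I_n1 * 'I_n2 -> 'I_(n1 * n2)) x : int := (nat_of_ord (phi x))%:Z.

Lemma small_mult (c N a b : int) : 0 <= a < N -> 0 <= b < N -> a = b + c * N -> c = 0.
Proof. nia. Qed.

Lemma main_gen n1 n2 (phi : 'I_n1 * 'I_n2 -> 'I_(n1 * n2))
  (e : 'I_n1 * 'I_n2 -> 'I_n1 * 'I_n2) (d1 d2 : int) :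
  injective phi -> (1 <= n1)%N -> (1 <= n2)%N ->
  (d1 = 0 /\ (1 <= n1)%N) \/ (d1 = 1 /\ (3 <= n1)%N) ->
  (d2 = 0 /\ (1 <= n2)%N) \/ (d2 = 1 /\ (3 <= n2)%N) ->
  (forall x, e x <> x) -> (forall x, e (e x) <> x) ->
  (forall x, exists c1 c2 : int,
      (nat_of_ord (e x).1)%:Z = (nat_of_ord x.1)%:Z + d1 + c1 * n1%:Z /\
      (nat_of_ord (e x).2)%:Z = (nat_of_ord x.2)%:Z + d2 + c2 * n2%:Z) ->
  exists k, has_repeated_diff phi k.
Proof.
move=> inj hn1 hn2 hd1 hd2 hex heex hc.
set N : int := (n1 * n2)%N%:Z.
have hN : 0 < N by rewrite /N; nia.
have Gb : forall x, 0 <= Gv phi x < N.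
  move=> x; rewrite /Gv /N; have := ltn_ord (phi x); lia.
have eqG : forall a b (c : int), Gv phi a = Gv phi b + c * N -> a = b.
  move=> a b c h; apply: inj; apply: ord_inj.
  have c0 := small_mult (Gb a) (Gb b) h.
  move: h; rewrite c0 mul0r addr0 /Gv; lia.
pose df x := ((Gv phi (e x) - Gv phi x) %% N)%Z.
have dfb : forall x, 1 <= df x <= N - 1.
  move=> x; have := divz_eq (Gv phi (e x) - Gv phi x) N.
  rewrite -/(df x) => h.
  have : 0 <= df x < N.
    have hN0 : N != 0 by rewrite gt_eqF.
    by rewrite /df modz_ge0 //= (lt_le_trans (ltz_mod _ hN0)) // gtr0_norm.
  case: (df x =P 0) => [h0|h0] hb; last by lia.
  exfalso; apply: (hex x); apply: (eqG _ _ ((Gv phi (e x) - Gv phi x) %/ N)%Z); lia.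
have [x [y [xy hxy]]] : exists x y, x <> y /\ df x = df y.
  apply: NNPP => hno.
  have inj_h : forall a b, df a = df b -> a = b.
    move=> a b hab; apply: NNPP => hne; apply: hno; by exists a, b.
  have hlt : forall a, ((absz (df a)).-1 < (n1 * n2).-1)%N.
    move=> a; have := dfb a; rewrite /N; lia.
  pose h a := Ordinal (hlt a).
  have : injective h.
    move=> a b /(congr1 val) /= hab; apply: inj_h; have := dfb a; have := dfb b; lia.
  move/leq_card; rewrite card_prod !card_ord; lia.
set dl := df x.
have [cx hcx] : exists c, Gv phi (e x) = Gv phi x + c * N + dl.
  exists ((Gv phi (e x) - Gv phi x) %/ N)%Z.
  have := divz_eq (Gv phi (e x) - Gv phi x) N; rewrite -/(df x) -/dl; lia.
have [cy hcy] : exists c, Gv phi (e y) = Gv phi y + c * N + dl.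
  exists ((Gv phi (e y) - Gv phi y) %/ N)%Z.
  have := divz_eq (Gv phi (e y) - Gv phi y) N; rewrite -/(df y) -hxy -/dl; lia.
have hdl := dfb x; rewrite -/dl in hdl.
have [k1 [a1 [b1 [h11 h12 h13 h14]]]] := @coord12 _ _ _ _ (ltn_ord x.1) (ltn_ord y.1) hd1.
have [k2 [a2 [b2 [h21 h22 h23 h24]]]] := @coord12 _ _ _ _ (ltn_ord x.2) (ltn_ord y.2) hd2.
have hfail : ~ (2 * dl = N /\ (Gv phi y - Gv phi x = dl \/ Gv phi x - Gv phi y = dl)).
  move=> [h2 [hv|hv]].
    have e1 : e x = y by apply: (eqG _ _ cx); lia.
    have e2 : e y = x by apply: (eqG _ _ (cy + 1)); lia.
    by apply: (heex x); rewrite e1 e2.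
  have e1 : e y = x by apply: (eqG _ _ cy); lia.
  have e2 : e x = y by apply: (eqG _ _ (cx + 1)); lia.
  by apply: (heex y); rewrite e1 e2.
have [eps [k3 [a3 [b3 [heps [h31 [h32 [h33 [h34 [h35 [h36 [h37 h38]]]]]]]]]]]] :=
  @coord3 _ _ _ _ (Gb x) (Gb y) hdl hfail.
have hE : eps * N = 0 \/ eps * N = N by case: heps => ->; [left; rewrite mul0r | right; rewrite mul1r].
have [cx1 [cx2 [hcx1 hcx2]]] := hc x.
have [cy1 [cy2 [hcy1 hcy2]]] := hc y.
have bx1 := ltn_ord x.1. have bx2 := ltn_ord x.2.
have by1 := ltn_ord y.1. have by2 := ltn_ord y.2.
have bex1 := ltn_ord (e x).1. have bex2 := ltn_ord (e x).2.
have bey1 := ltn_ord (e y).1. have bey2 := ltn_ord (e y).2.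
have Gex := Gb (e x). have Gey := Gb (e y). have Gx := Gb x. have Gy := Gb y.
exists (k1 + 1, k2 + 1, k3 + 1).
exists ((nat_of_ord x.1)%:Z + a1 * n1%:Z + 1, (nat_of_ord x.2)%:Z + a2 * n2%:Z + 1, Gv phi x + a3 * N + 1).
exists ((nat_of_ord x.1)%:Z + a1 * n1%:Z + 1 + d1, (nat_of_ord x.2)%:Z + a2 * n2%:Z + 1 + d2,
        Gv phi x + a3 * N + 1 + (dl - eps * N)).
exists ((nat_of_ord y.1)%:Z + b1 * n1%:Z + 1, (nat_of_ord y.2)%:Z + b2 * n2%:Z + 1, Gv phi y + b3 * N + 1).
exists ((nat_of_ord y.1)%:Z + b1 * n1%:Z + 1 + d1, (nat_of_ord y.2)%:Z + b2 * n2%:Z + 1 + d2,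
        Gv phi y + b3 * N + 1 + (dl - eps * N)).
split.
- rewrite /window_dot /in_window /is_dot /= -/N; apply/andP; split.
    apply/and3P; split; apply/andP; split; lia.
  apply/existsP; exists x.1; apply/existsP; exists x.2; rewrite -surjective_pairing -/(Gv phi x).
  apply/and3P; split; apply/eqP.
  + apply: (@mod_char _ _ a1); [apply/andP; split|]; lia.
  + apply: (@mod_char _ _ a2); [apply/andP; split|]; lia.
  + apply: (@mod_char _ _ a3); [apply/andP; split|]; lia.
- rewrite /window_dot /in_window /is_dot /= -/N; apply/andP; split.
    apply/and3P; split; apply/andP; split; lia.
  apply/existsP; exists (e x).1; apply/existsP; exists (e x).2; rewrite -surjective_pairing -/(Gv phi (e x)).
  apply/and3P; split; apply/eqP.
  + apply: (@mod_char _ _ (a1 - cx1)); [apply/andP; split|]; lia.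
  + apply: (@mod_char _ _ (a2 - cx2)); [apply/andP; split|]; lia.
  + apply: (@mod_char _ _ (a3 - cx - eps)); [apply/andP; split|]; lia.
- rewrite /window_dot /in_window /is_dot /= -/N; apply/andP; split.
    apply/and3P; split; apply/andP; split; lia.
  apply/existsP; exists y.1; apply/existsP; exists y.2; rewrite -surjective_pairing -/(Gv phi y).
  apply/and3P; split; apply/eqP.
  + apply: (@mod_char _ _ b1); [apply/andP; split|]; lia.
  + apply: (@mod_char _ _ b2); [apply/andP; split|]; lia.
  + apply: (@mod_char _ _ b3); [apply/andP; split|]; lia.
- rewrite /window_dot /in_window /is_dot /= -/N; apply/andP; split.
    apply/and3P; split; apply/andP; split; lia.
  apply/existsP; exists (e y).1; apply/existsP; exists (e y).2; rewrite -surjective_pairing -/(Gv phi (e y)).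
  apply/and3P; split; apply/eqP.
  + apply: (@mod_char _ _ (b1 - cy1)); [apply/andP; split|]; lia.
  + apply: (@mod_char _ _ (b2 - cy2)); [apply/andP; split|]; lia.
  + apply: (@mod_char _ _ (b3 - cy - eps)); [apply/andP; split|]; lia.
split.
- by apply/eqP => -[_ _ h]; lia.
- by apply/eqP => -[_ _ h]; lia.
- apply/eqP => -[[h1 h2 h3]] _; case: xy.
  have c1 := @small_mult (b1 - a1) n1%:Z (nat_of_ord x.1) (nat_of_ord y.1) ltac:(lia) ltac:(lia) ltac:(lia).
  have c2 := @small_mult (b2 - a2) n2%:Z (nat_of_ord x.2) (nat_of_ord y.2) ltac:(lia) ltac:(lia) ltac:(lia).
  have ea1 : b1 = a1 by lia.
  have ea2 : b2 = a2 by lia.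
  subst b1 b2.
  rewrite [x]surjective_pairing [y]surjective_pairing.
  by congr pair; apply: ord_inj; lia.
- rewrite /diff_vec /=; congr (_, _, _); lia.
Qed.
End S2.

Lemma ordS_val n (i : 'I_n) : nat_of_ord (ordS i) = if i.+1 == n then 0%N else i.+1.
Proof.
rewrite /ordS /=; case: eqP => [->|h]; first by rewrite modnn.
rewrite modn_small //; have := ltn_ord i; lia.
Qed.

Lemma ordS_ne n (i : 'I_n) : (2 <= n)%N -> ordS i <> i.
Proof.
move=> hn /(congr1 (@nat_of_ord n)); rewrite ordS_val.
have := ltn_ord i; case: eqP; lia.
Qed.

Lemma ordS2_ne n (i : 'I_n) : (3 <= n)%N -> ordS (ordS i) <> i.
Proof.
move=> hn /(congr1 (@nat_of_ord n)); rewrite !ordS_val.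
have := ltn_ord i; case: (i.+1 =P n) => ? /=.
  case: (1 =P n) => ?; lia.
case: (i.+2 =P n) => ?; lia.
Qed.

Lemma ordS_c n (i : 'I_n) : exists c : int, (nat_of_ord (ordS i))%:Z = (nat_of_ord i)%:Z + 1 + c * n%:Z.
Proof.
exists (if i.+1 == n then -1 else 0); rewrite ordS_val.
have := ltn_ord i; case: eqP; lia.
Qed.

Lemma three n1 n2 : (2 <= n1)%N -> (2 <= n2)%N ->
  [|| odd n1 && odd n2,
      [&& ~~ odd n1, ~~ odd n2 & (4 < maxn n1 n2)%N] |
      [&& ~~ odd n1, (2 < n1)%N & odd n2] || [&& ~~ odd n2, (2 < n2)%N & odd n1]] ->
  (2 < n1)%N \/ (2 < n2)%N.
Proof.
move=> h1 h2 H.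
case: (ltnP 2 n1) => [h|h]; first by left.
right; have e : n1 = 2%N by lia.
subst n1; move: H => /=.
case/orP => [/andP[_ H]|/and3P[_ _ //]]; lia.
Qed.

Theorem mainTheorem11 (n1 n2 : nat)
  (phi : 'I_n1 * 'I_n2 -> 'I_(n1 * n2)) :
  bijective phi -> (2 <= n1)%N -> (2 <= n2)%N ->
  [|| odd n1 && odd n2,
      [&& ~~ odd n1, ~~ odd n2 & (4 < maxn n1 n2)%N] |
      [&& ~~ odd n1, (2 < n1)%N & odd n2] || [&& ~~ odd n2, (2 < n2)%N & odd n1]] ->
  exists k : point, has_repeated_diff phi k.
Proof.
move=> bij h1 h2 H.
have inj := bij_inj bij.
case: (@three _ _ h1 h2 H) => h3.
- apply: (@main_gen n1 n2 phi (fun x => (ordS x.1, x.2)) 1 0 inj) => //; try lia.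
  + move=> x /(congr1 fst) /= h; exact: (@ordS_ne _ _ h1 h).
  + by move=> x /(congr1 fst) /= h; exact: (@ordS2_ne _ _ h3 h).
  + move=> x; have [c hc] := @ordS_c _ x.1; exists c, 0; split; [exact: hc | rewrite /=; lia].
- apply: (@main_gen n1 n2 phi (fun x => (x.1, ordS x.2)) 0 1 inj) => //; try lia.
  + by move=> x /(congr1 snd) /= h; exact: (@ordS_ne _ _ h2 h).
  + by move=> x /(congr1 snd) /= h; exact: (@ordS2_ne _ _ h3 h).
  + move=> x; have [c hc] := @ordS_c _ x.2; exists 0, c; split; [rewrite /=; lia | exact: hc].
Qed.
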